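(* Let $\mathbb{K}$ be a field, $n>1$, $a=\sum_{j=0}^d c_j s^j\in\mathbb{K}[s]^n$ a non-zero row vector of degree $d$, and $A\in\mathbb{K}^{(2d+1)\times n(d+1)}$ the matrix whose $(i,\,kn+r)$ entry ($1\le i\le 2d+1$, $0\le k\le d$, $1\le r\le n$) is the $r$-th entry of $c_{i-1-k}$ (zero if $i-1-k\notin\{0,\dots,d\}$). Let $p$, $q$, $\tilde q$, $b_i$ ($i\in q$) be as in the context. Then for any $\iota\in\tilde q$ and any integer $k$ with $0\le k\le\left\lfloor\frac{n(d+1)-\iota}{n}\right\rfloor$, $$b_{\iota+kn}^\flat=s^k\,b_\iota^\flat+\sum_{\{j\in p\,\mid\, j<\iota,\ j+kn\in q\}}\alpha_j\,b_{j+kn}^\flat,$$ where the constants $\alpha_j\in\mathbb{K}$ are those in the expression $A_{*\iota}=\sum_{\{j\in p\mid j<\iota\}}\alpha_jA_{*j}$ of the $\iota$-th column of $A$ as a linear combination of the preceding pivotal columns.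
   Context: $A_{*j}$ is the $j$-th column of $A$. A column of a matrix is pivotal if it is either the first column and non-zero, or linearly independent of all previous columns; otherwise non-pivotal. $p$ is the set of pivotal indices of $A$, $q$ the set of non-pivotal indices, and $\tilde q=\{\min\varrho\mid\varrho\in q/(n)\}$ the set of basic non-pivotal indices (minimal elements of the classes of $q$ modulo $n$). Every non-pivotal column $A_{*i}$ is uniquely a linear combination $A_{*i}=\sum_{\{j\in p\mid j<i\}}\alpha^{(i)}_jA_{*j}$ of preceding pivotal columns. Define $V\in\mathbb{K}^{n(d+1)\times n(d+1)}$ with columns $v_i$: for $i\in p$, $v_i=e_i$; for $i\in q$, $v_i=\sum_{\{j\in p\mid j<i\}}\alpha^{(i)}_j e_j$, where $e_i$ is the $i$-th standard basis vector. For $i\in q$, $b_i=e_i-v_i$. For $v\in\mathbb{K}^{n(d+1)}$ in blocks $v=[w_0;\dots;w_d]$ with $w_i\in\mathbb{K}^n$, $v^\flat=\sum_{i=0}^d s^i w_i\in\mathbb{K}[s]^n$. *)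

(* Defs.v *)
From HB Require Import structures.
From mathcomp Require Import all_boot all_order all_algebra.
Set Implicit Arguments. Unset Strict Implicit. Unset Printing Implicit Defensive.
Import Order.TTheory GRing.Theory Num.Theory.
Local Open Scope ring_scope.

(* Conventions: all indices are 0-based (row i-1, column j-1 of the paper
   become row i, column j here). *)

Section Defs.
Variable K : fieldType.

Definition rvdeg n (a : 'rV[{poly K}]_n) : nat :=
  (\max_(r < n) (size (a ord0 r)).-1)%N.

Definition aent n (a : 'rV[{poly K}]_n) (r : nat) : {poly K} :=
  if insub r is Some r' then a ord0 r' else 0.

(* The matrix A: entry (i, k*n + r) is the r-th entry of c_(i-k)
   (zero if i-k is not in {0..d}); c_j = j-th coefficient vector of a. *)
Definition Amat n d (a : 'rV[{poly K}]_n) : 'M[K]_(d.*2.+1, n * d.+1) :=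
  \matrix_(i < d.*2.+1, j < n * d.+1)
     if (j %/ n <= i)%N then (aent a (j %% n))`_(i - j %/ n) else 0.

(* column j is pivotal: it is not in the span of the previous columns
   (for j = 0 this span is {0}, so it means column 0 is non-zero) *)
Definition pivotal m N (A : 'M[K]_(m, N)) (j : 'I_N) : bool :=
  ~~ (row j A^T <= (\sum_(i < N | (i < j)%N) <<row i A^T>>)%MS)%MS.

(* nat-indexed membership in q (false for out-of-range indices) *)
Definition nonpivn m N (A : 'M[K]_(m, N)) (x : nat) : bool :=
  if insub x is Some x' then ~~ pivotal A x' else false.

Definition basic_nonpiv m N (A : 'M[K]_(m, N)) (n : nat) (i : 'I_N) : bool :=
  ~~ pivotal A i &&
  [forall j : 'I_N, (~~ pivotal A j && (j == i %[mod n])) ==> (i <= j)%N].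

Definition is_coef m N (A : 'M[K]_(m, N)) (i : 'I_N) (al : 'I_N -> K) : Prop :=
  (forall j, al j != 0 -> pivotal A j && (j < i)%N) /\
  col i A = \sum_(j < N) al j *: col j A.

Definition Vmat m N (A : 'M[K]_(m, N)) (alpha : 'I_N -> 'I_N -> K) : 'M[K]_N :=
  \matrix_(r < N, i < N)
     if pivotal A i then (r == i)%:R else alpha i r.

Definition bvec m N (A : 'M[K]_(m, N)) (alpha : 'I_N -> 'I_N -> K) (i : 'I_N)
  : 'cV[K]_N := delta_mx i 0 - col i (Vmat A alpha).

Definition bvecn m N (A : 'M[K]_(m, N)) (alpha : 'I_N -> 'I_N -> K) (x : nat)
  : 'cV[K]_N := if insub x is Some x' then bvec A alpha x' else 0.

Definition vat N (v : 'cV[K]_N) (x : nat) : K :=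
  if insub x is Some x' then v x' ord0 else 0.

(* v^flat = sum_k s^k w_k, where v = [w_0; ...; w_d], w_k in K^n *)
Definition flat n d (v : 'cV[K]_(n * d.+1)) : 'rV[{poly K}]_n :=
  \row_(r < n) \poly_(k < d.+1) vat v (k * n + r).

End Defs.

(* Main.v *)
Require Import Defs.
From HB Require Import structures.
From mathcomp Require Import all_boot all_order all_algebra.
From mathcomp Require Import zify.
Import Order.TTheory GRing.Theory Num.Theory.
Local Open Scope ring_scope.
Set Implicit Arguments. Unset Strict Implicit. Unset Printing Implicit Defensive.

Section Gen.
Variables (F : fieldType) (m N : nat) (A : 'M[F]_(m, N)).

Lemma mulmx_col (x : 'cV[F]_N) : A *m x = \sum_r x r 0 *: col r A.
Proof.
rewrite {1}(matrix_sum_delta x) mulmx_sumr; apply: eq_bigr => r _.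
by rewrite big_ord1 -scalemxAr colE.
Qed.

Lemma nonpiv_of (i : 'I_N) (x : 'cV[F]_N) :
  (forall r, x r 0 != 0 -> (r < i)%N) -> A *m x = col i A -> ~~ pivotal A i.
Proof.
move=> Hs H; rewrite /pivotal negbK -tr_col -H mulmx_col raddf_sum /=.
apply: summx_sub => r _; rewrite linearZ /= tr_col.
have [->|nz] := eqVneq (x r 0) 0; first by rewrite scale0r sub0mx.
apply: scalemx_sub; apply: (sumsmx_sup r); first exact: Hs.
by rewrite genmxE.
Qed.

Lemma piv_indep (x : 'cV[F]_N) :
  (forall r, ~~ pivotal A r -> x r 0 = 0) -> A *m x = 0 -> x = 0.
Proof.
move=> Hs H; apply/matrixP => r0 c; rewrite ord1 mxE.
apply/eqP; apply/negPn/negP => nz0.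
pose S := [pred r | x r 0 != 0].
have [j Sj jmax] := @arg_maxnP _ r0 S val nz0.
pose y := - (x j 0)^-1 *: (x - x j 0 *: delta_mx j 0).
have : ~~ pivotal A j.
  apply: (@nonpiv_of j y).
    move=> r; rewrite /y !mxE.
    have [->|rj] := eqVneq r j; first by rewrite eqxx mulr1 subrr mulr0 eqxx.
    rewrite /= mulr0 subr0 mulf_eq0 negb_or => /andP[_ nzr].
    have := jmax r nzr; rewrite /= leq_eqVlt => /orP[/eqP h|//].
    by case/eqP: rj; apply: val_inj.
  rewrite /y -scalemxAr mulmxBr H -scalemxAr -colE sub0r scalerN scaleNr opprK scalerA mulVf ?scale1r //.
apply/negP; rewrite negbK.
by apply: contraR Sj => /Hs ->; rewrite /S /= eqxx.
Qed.
End Gen.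
Definition Sh (K : fieldType) (m k : nat) : 'M[K]_m :=
  \matrix_(i, i') ((i' + k)%N == i)%:R.

Lemma Amat_shift (K : fieldType) n d (a : 'rV[{poly K}]_n) (j j' : 'I_(n * d.+1)) k :
  (0 < n)%N -> j' = (j + k * n)%N :> nat ->
  col j' (Amat d a) = Sh K _ k *m col j (Amat d a).
Proof.
move=> n0 ej; apply/matrixP => i c; rewrite !mxE.
have ed : (j' %/ n = j %/ n + k)%N by rewrite ej addnC divnMDl // addnC.
have em : (j' %% n = j %% n)%N by rewrite ej addnC modnMDl.
rewrite ed em.
case: (leqP k i) => ki.
  have lt : (i - k < d.*2.+1)%N by apply: leq_ltn_trans (leq_subr _ _) (ltn_ord i).
  rewrite (bigD1 (Ordinal lt)) //= big1 ?addr0.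
    rewrite !mxE subnK // eqxx mul1r.
    by rewrite /= leq_subRL // (addnC k) subnDA subnAC.
  move=> i' ne; rewrite !mxE.
  case: eqP => [h|]; last by rewrite mul0r.
  by case/eqP: ne; apply: val_inj => /=; rewrite -h addnK.
rewrite big1.
  by rewrite ifF //; apply/negbTE; rewrite -ltnNge; apply: leq_trans ki (leq_addl _ _).
move=> i' _; rewrite !mxE; case: eqP => [h|]; last by rewrite mul0r.
by move: ki; rewrite -h ltnNge leq_addl.
Qed.
Lemma insub_lt N x (h : (x < N)%N) : (insub x : option 'I_N) = Some (Ordinal h).
Proof. by rewrite insubT. Qed.
Lemma insub_ge N x (h : (N <= x)%N) : (insub x : option 'I_N) = None.
Proof. by rewrite insubF // ltnNge h. Qed.

Section Flat.
Variables (K : fieldType) (n d : nat).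
Local Notation N := (n * d.+1)%N.

Lemma vatD (u v : 'cV[K]_N) x : vat (u + v) x = vat u x + vat v x.
Proof. by rewrite /vat; case: insub => [x'|]; rewrite ?mxE ?addr0. Qed.
Lemma vatZ c (v : 'cV[K]_N) x : vat (c *: v) x = c * vat v x.
Proof. by rewrite /vat; case: insub => [x'|]; rewrite ?mxE ?mulr0. Qed.

Lemma flatD (u v : 'cV[K]_N) : flat (u + v) = flat u + flat v.
Proof.
apply/rowP => r; rewrite !mxE; apply/polyP => m.
by rewrite coefD !coef_poly; case: ifP; rewrite ?vatD ?addr0.
Qed.
Lemma flatZ c (v : 'cV[K]_N) : flat (c *: v) = c%:P *: flat v.
Proof.
apply/rowP => r; rewrite !mxE; apply/polyP => m.
by rewrite coefCM !coef_poly; case: ifP; rewrite ?vatZ ?mulr0.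
Qed.
Lemma flat0 : flat (0 : 'cV[K]_N) = 0.
Proof. by rewrite -(scale0r 0) flatZ scale0r. Qed.
Lemma flatB (u v : 'cV[K]_N) : flat (u - v) = flat u - flat v.
Proof. by rewrite flatD -scaleN1r flatZ polyCN scaleNr polyC1 scale1r. Qed.
Lemma flat_sum (I : finType) (P : pred I) (F : I -> 'cV[K]_N) :
  flat (\sum_(i | P i) F i) = \sum_(i | P i) flat (F i).
Proof. exact: (big_morph _ flatD flat0). Qed.

Definition En (x : nat) : 'cV[K]_N := if insub x is Some x' then delta_mx x' 0 else 0.

Lemma vat_En x y : vat (En x) y = ((y == x) && (x < N)%N)%:R.
Proof.
rewrite /vat /En.
have [hx|hx] := ltnP x N; have [hy|hy] := ltnP y N.
- by rewrite (insub_lt hx) (insub_lt hy) mxE /= andbT.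
- rewrite (insub_lt hx) (insub_ge hy).
  by case: eqP => // e; move: hy; rewrite e leqNgt hx.
- by rewrite (insub_ge hx) andbF; case: insub => [?|]; rewrite ?mxE.
- by rewrite (insub_ge hx) andbF; case: insub => [?|]; rewrite ?mxE.
Qed.

Lemma En_ord (x : 'I_N) : En x = delta_mx x 0.
Proof. by rewrite /En valK. Qed.

Lemma eq_mulnD (m r y : nat) : (r < n)%N ->
  ((m * n + r)%N == y) = (m == y %/ n)%N && (r == y %% n)%N.
Proof.
move=> rn; apply/eqP/andP => [<-|[/eqP -> /eqP ->]]; last by rewrite -divn_eq.
have n0 : (0 < n)%N by apply: leq_ltn_trans rn.
by rewrite divnMDl // divn_small // addn0 modnMDl modn_small.
Qed.

Lemma flat_En_shift x k : (0 < n)%N -> (x + k * n < N)%N ->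
  flat (En (x + k * n)) = 'X^k *: flat (En x).
Proof.
move=> n0 lt; apply/rowP => r; rewrite !mxE; apply/polyP => m.
rewrite coefXnM !coef_poly !vat_En lt !eq_mulnD //.
have ltx : (x < N)%N by apply: leq_ltn_trans lt; apply: leq_addr.
rewrite ltx !andbT.
rewrite [(x + _)%N]addnC divnMDl // modnMDl.
have hb : (k + x %/ n < d.+1)%N.
  by rewrite -divnMDl // ltn_divLR //; nia.
set q := (x %/ n)%N.
case: (eqVneq m (k + q)%N) => [->|ne].
  rewrite hb ltnNge leq_addr /= addKn.
  by rewrite (leq_ltn_trans (leq_addl _ _) hb) eqxx.
have e1 := negbTE ne.
case: (ltnP m k) => mk /=.
  by case: ifP.
have e2 : ((m - k)%N == q) = false.
  by apply/eqP => e; move/eqP: ne; apply; lia.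
by rewrite e2 /=; case: ifP; case: ifP.
Qed.
End Flat.

Section Main.
Variables (K : fieldType) (n d : nat) (a : 'rV[{poly K}]_n)
  (alpha : 'I_(n * d.+1) -> 'I_(n * d.+1) -> K).
Local Notation N := (n * d.+1)%N.
Local Notation A := (Amat d a).
Local Notation V := (Vmat A alpha).
Hypothesis hcoef : forall i : 'I_N, ~~ pivotal A i -> is_coef A i (alpha i).

Lemma colV_piv (x : 'I_N) : pivotal A x -> col x V = delta_mx x 0.
Proof.
move=> px; apply/matrixP => r c; by rewrite !mxE px (ord1 c) eqxx andbT.
Qed.

Lemma colV_mul (x : 'I_N) : A *m col x V = col x A.
Proof.
case px: (pivotal A x); first by rewrite colV_piv // -colE.
have [_ ->] := hcoef (negbT px).
by rewrite mulmx_col; apply: eq_bigr => r _; rewrite !mxE px.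
Qed.

Lemma colV_supp (x r : 'I_N) : ~~ pivotal A r -> col x V r 0 = 0.
Proof.
move=> pr; rewrite !mxE; case px: (pivotal A x).
  by case: eqP => // e; move: pr; rewrite e px.
have [s _] := hcoef (negbT px).
by apply/eqP; apply: contraR pr => /s /andP[].
Qed.

Lemma colV_le (x r : 'I_N) : col x V r 0 != 0 -> (r <= x)%N.
Proof.
rewrite !mxE; case px: (pivotal A x).
  by have [->|ne] := eqVneq r x; rewrite ?leqnn // eqxx.
have [s _] := hcoef (negbT px).
by move=> /s /andP[_ /ltnW].
Qed.

Definition Vn (x : nat) : 'cV[K]_N := if insub x is Some x' then col x' V else 0.

Lemma bvecnE x : bvecn A alpha x = En K n d x - Vn x.
Proof. by rewrite /bvecn /En /Vn; case: insub => [x'|]; rewrite ?subr0. Qed.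

Lemma VnE x : Vn x = En K n d x - bvecn A alpha x.
Proof. by rewrite bvecnE opprB addrC subrK. Qed.

Lemma Vn_lt x (h : (x < N)%N) : Vn x = col (Ordinal h) V.
Proof. by rewrite /Vn insub_lt. Qed.

End Main.

Theorem lemma8 (K : fieldType) (n d : nat) (a : 'rV[{poly K}]_n)
  (alpha : 'I_(n * d.+1) -> 'I_(n * d.+1) -> K) :
  (1 < n)%N ->
  a != 0 ->
  rvdeg a = d ->
  (forall i : 'I_(n * d.+1), ~~ pivotal (Amat d a) i ->
     is_coef (Amat d a) i (alpha i)) ->
  forall (iota : 'I_(n * d.+1)) (k : nat),
  basic_nonpiv (Amat d a) n iota ->
  (k <= (n * d.+1 - iota.+1) %/ n)%N ->
  flat (bvecn (Amat d a) alpha (iota + k * n)) =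
    'X^k *: flat (bvec (Amat d a) alpha iota) +
    \sum_(j < n * d.+1 | pivotal (Amat d a) j && (j < iota)%N &&
                         nonpivn (Amat d a) (j + k * n))
       (alpha iota j)%:P *: flat (bvecn (Amat d a) alpha (j + k * n)).
Proof.
move=> n1 _ _ hcoef iota k hbasic hk.
have n0 : (0 < n)%N by apply: ltnW.
have hnp : ~~ pivotal (Amat d a) iota by case/andP: hbasic.
have [supp_i col_i] := hcoef iota hnp.
have ltI : (iota + k * n < n * d.+1)%N.
  by move: hk; rewrite leq_divRL // => hk; have := ltn_ord iota; lia.
pose I := Ordinal ltI.
have ltJ : forall j : 'I_(n * d.+1), alpha iota j != 0 -> (j + k * n < n * d.+1)%N.
  move=> j /supp_i /andP[_ jl]; have := ltI; lia.
pose S := \sum_(j < n * d.+1) alpha iota j *: Vn a alpha (j + k * n).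
have K1 : Amat d a *m S = col I (Amat d a).
  rewrite (@Amat_shift _ _ _ a iota I k n0 erefl) col_i mulmx_sumr mulmx_sumr.
  apply: eq_bigr => j _.
  have [->|nz] := eqVneq (alpha iota j) 0; first by rewrite !scale0r !mulmx0.
  rewrite -!scalemxAr (Vn_lt a alpha (ltJ j nz)) (colV_mul hcoef).
  by rewrite (@Amat_shift _ _ _ a j (Ordinal (ltJ j nz)) k n0 erefl).
have K2 : forall r, ~~ pivotal (Amat d a) r -> S r 0 = 0.
  move=> r pr; rewrite /S summxE big1 // => j _; rewrite mxE.
  have [->|nz] := eqVneq (alpha iota j) 0; first by rewrite mul0r.
  by rewrite (Vn_lt a alpha (ltJ j nz)) (colV_supp hcoef) ?mulr0.
have K3 : forall r : 'I_(n * d.+1), S r 0 != 0 -> (r < I)%N.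
  move=> r; apply: contraR; rewrite -leqNgt => Ir.
  rewrite /S summxE big1 // => j _; rewrite mxE.
  have [->|nz] := eqVneq (alpha iota j) 0; first by rewrite mul0r.
  rewrite (Vn_lt a alpha (ltJ j nz)).
  apply/eqP; rewrite mulf_eq0; apply/orP; right.
  apply/negPn/negP => /(colV_le hcoef) /= rl.
  have := supp_i j nz; case/andP => _ jl.
  move: Ir rl jl; rewrite /=; lia.
have K4 : ~~ pivotal (Amat d a) I by apply: nonpiv_of K3 K1.
have K5 : col I (Vmat (Amat d a) alpha) = S.
  apply/eqP; rewrite -subr_eq0; apply/eqP.
  have H1 : forall r, ~~ pivotal (Amat d a) r ->
     (col I (Vmat (Amat d a) alpha) - S) r 0 = 0.
    move=> r pr.
    have -> : (col I (Vmat (Amat d a) alpha) - S) r 0 =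
              col I (Vmat (Amat d a) alpha) r 0 - S r 0 by rewrite !mxE.
    have h := K2 r pr; have h2 := colV_supp hcoef I pr.
    by transitivity (0 - 0 : K); [congr (_ - _) | exact: subrr].
  have H2 : Amat d a *m (col I (Vmat (Amat d a) alpha) - S) = 0.
    by rewrite mulmxBr (colV_mul hcoef) K1 subrr.
  exact: piv_indep H1 H2.
have L : flat (bvecn (Amat d a) alpha (iota + k * n)) =
   flat (En K n d (iota + k * n))
   - \sum_(j < n * d.+1) (alpha iota j)%:P *: flat (En K n d (j + k * n))
   + \sum_(j < n * d.+1) (alpha iota j)%:P *: flat (bvecn (Amat d a) alpha (j + k * n)).
  rewrite bvecnE (Vn_lt a alpha ltI) K5 flatB /S flat_sum.
  under eq_bigr => j _ do rewrite flatZ VnE flatB scalerBr.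
  by rewrite sumrB opprB addrA addrAC.
have bv : bvec (Amat d a) alpha iota =
    En K n d iota - \sum_(j < n * d.+1) alpha iota j *: En K n d j.
  rewrite /bvec En_ord; congr (_ - _).
  apply/matrixP => r c; rewrite (ord1 c) !mxE (negbTE hnp) summxE.
  rewrite (bigD1 r) //= big1 => [|j ne].
    by rewrite En_ord !mxE eqxx mulr1 addr0.
  by rewrite En_ord !mxE eq_sym (negbTE ne) mulr0.
have R1 : 'X^k *: flat (bvec (Amat d a) alpha iota) =
   flat (En K n d (iota + k * n))
   - \sum_(j < n * d.+1) (alpha iota j)%:P *: flat (En K n d (j + k * n)).
  rewrite bv flatB flat_sum scalerBr -flat_En_shift // scaler_sumr.
  congr (_ - _); apply: eq_bigr => j _.
  have [->|nz] := eqVneq (alpha iota j) 0; first by rewrite flatZ !polyC0 !scale0r scaler0.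
  by rewrite flatZ scalerA mulrC -scalerA flat_En_shift // ltJ.
have R2 : \sum_(j < n * d.+1 | pivotal (Amat d a) j && (j < iota)%N &&
                         nonpivn (Amat d a) (j + k * n))
       (alpha iota j)%:P *: flat (bvecn (Amat d a) alpha (j + k * n)) =
   \sum_(j < n * d.+1) (alpha iota j)%:P *: flat (bvecn (Amat d a) alpha (j + k * n)).
  rewrite big_mkcond; apply: eq_bigr => j _; case: ifP => // hc.
  have [->|nz] := eqVneq (alpha iota j) 0; first by rewrite polyC0 !scale0r.
  have := supp_i j nz; case/andP => pj jl.
  move: hc; rewrite pj jl /= /nonpivn /bvecn (insub_lt (ltJ j nz)) => /negbFE pJ.
  by rewrite /bvec colV_piv // subrr flat0 scaler0.
by rewrite L R1 R2.
Qed.
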